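(* Let $E=\{x:\langle Ax,x\rangle=1\}$, $A=\operatorname{diag}(1/a_1^2,1/a_2^2)$, and let $P=(p_1,\dots,p_n)$ be an $n$-periodic billiard trajectory in $E$ with angles $\alpha_1,\dots,\alpha_n$, perimeter $L$, and $J=-\langle u_1,Ap_1\rangle$ where $u_1=(p_2-p_1)/|p_2-p_1|$. Then \[\sum_{i=1}^n\cos\alpha_i=JL-n.\]
   Context: An $n$-periodic billiard trajectory in $E$ is a closed polygon $(p_1,\dots,p_n)$ (indices mod $n$) with all $p_i\in E$ obeying the law of reflection at every vertex. The angle $\alpha_i$ is the angle at $p_i$ between the segments $p_ip_{i-1}$ and $p_ip_{i+1}$. *)

(* Defs.v *)
From Stdlib Require Import Reals.
Open Scope R_scope.

Definition pt := (R * R)%type.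
Definition dot (u v : pt) : R := fst u * fst v + snd u * snd v.
Definition vsub (u v : pt) : pt := (fst u - fst v, snd u - snd v).
Definition vscale (c : R) (u : pt) : pt := (c * fst u, c * snd u).
Definition norm (u : pt) : R := sqrt (dot u u).

Definition Amul (a1 a2 : R) (x : pt) : pt := (fst x / a1 ^ 2, snd x / a2 ^ 2).

Definition on_ellipse (a1 a2 : R) (x : pt) : Prop := dot (Amul a1 a2 x) x = 1.

Definition unit_dir (p q : pt) : pt := vscale (/ norm (vsub q p)) (vsub q p).

(* law of reflection at q (incoming from p, outgoing to r): the outgoing unit
   direction is the mirror image of the incoming one w.r.t. the tangent line,
   i.e. u_out = u_in - 2 <u_in, nu> nu with nu = A q / |A q| the unit normal. *)
Definition reflection_law (a1 a2 : R) (p q r : pt) : Prop :=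
  let nu := vscale (/ norm (Amul a1 a2 q)) (Amul a1 a2 q) in
  let uin := unit_dir p q in
  unit_dir q r = vsub uin (vscale (2 * dot uin nu) nu).

(* n-periodic billiard trajectory in E, indexed by nat with p (i+n) = p i;
   vertices p_1..p_n are p 1 .. p n. *)
Definition periodic_billiard (a1 a2 : R) (n : nat) (p : nat -> pt) : Prop :=
  (2 <= n)%nat /\
  (forall i, p (i + n)%nat = p i) /\
  (forall i, on_ellipse a1 a2 (p i)) /\
  (forall i, p (S i) <> p i) /\
  (forall i, (1 <= i)%nat -> reflection_law a1 a2 (p (i - 1)%nat) (p i) (p (S i))).

Definition cos_angle (p : nat -> pt) (i : nat) : R :=
  let v := vsub (p (i - 1)%nat) (p i) in
  let w := vsub (p (S i)) (p i) in
  dot v w / (norm v * norm w).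

Definition perimeter (p : nat -> pt) (n : nat) : R :=
  sum_f_R0 (fun k => norm (vsub (p (S (S k))) (p (S k)))) (n - 1).

(* Main.v *)
Require Import Defs.
From Stdlib Require Import Reals Lra Lia Psatz.
Open Scope R_scope.

Lemma dot_scale_l c u v : dot (vscale c u) v = c * dot u v.
Proof. destruct u, v; unfold dot, vscale; simpl; ring. Qed.
Lemma dot_scale_r c u v : dot u (vscale c v) = c * dot u v.
Proof. destruct u, v; unfold dot, vscale; simpl; ring. Qed.
Lemma dot_comm u v : dot u v = dot v u.
Proof. destruct u, v; unfold dot; simpl; ring. Qed.
Lemma dot_sub_l u v w : dot (vsub u v) w = dot u w - dot v w.
Proof. destruct u, v, w; unfold dot, vsub; simpl; ring. Qed.
Lemma dot_sub_r u v w : dot w (vsub u v) = dot w u - dot w v.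
Proof. destruct u, v, w; unfold dot, vsub; simpl; ring. Qed.

Lemma dot_self_pos (d : pt) : d <> (0,0) -> 0 < dot d d.
Proof. destruct d as [x y]; unfold dot; simpl; intro H.
  destruct (Req_dec x 0); destruct (Req_dec y 0); subst; try (exfalso; now apply H).
  all: nra. Qed.

Lemma vsub_nz p q : q <> p -> vsub q p <> (0,0).
Proof. destruct p as [a b], q as [c d]; unfold vsub; simpl; intros H E.
  injection E; intros; apply H; f_equal; lra. Qed.

Lemma norm_sq d : norm d * norm d = dot d d.
Proof. unfold norm. apply sqrt_sqrt. destruct d; unfold dot; simpl; nra. Qed.

Lemma norm_pos d : d <> (0,0) -> 0 < norm d.
Proof. intro H. unfold norm. apply sqrt_lt_R0. now apply dot_self_pos. Qed.

Lemma unit_self d : d <> (0,0) ->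
  dot (vscale (/ norm d) d) (vscale (/ norm d) d) = 1.
Proof. intro H. rewrite dot_scale_l, dot_scale_r, <- norm_sq.
  pose proof (norm_pos d H). field. lra. Qed.

Lemma unit_sub p q : dot (unit_dir p q) (vsub q p) = norm (vsub q p).
Proof. unfold unit_dir. rewrite dot_scale_l, <- norm_sq.
  destruct (Req_dec (norm (vsub q p)) 0) as [E|E].
  - rewrite E; ring.
  - field; auto. Qed.

Lemma Amul_sym a1 a2 u v : dot u (Amul a1 a2 v) = dot (Amul a1 a2 u) v.
Proof. destruct u, v; unfold dot, Amul; simpl; unfold Rdiv; ring. Qed.

Lemma chord a1 a2 p q : on_ellipse a1 a2 p -> on_ellipse a1 a2 q ->
  dot (unit_dir p q) (Amul a1 a2 q) = - dot (unit_dir p q) (Amul a1 a2 p).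
Proof. unfold on_ellipse, unit_dir; intros Hp Hq.
  rewrite !dot_scale_l.
  assert (dot (vsub q p) (Amul a1 a2 q) + dot (vsub q p) (Amul a1 a2 p) = 0).
  { rewrite !dot_sub_l. rewrite (Amul_sym a1 a2 p q).
    rewrite (dot_comm q (Amul a1 a2 q)), (dot_comm p (Amul a1 a2 p)). rewrite (dot_comm q (Amul a1 a2 p)). lra. }
  nra. Qed.

Lemma Amul_nz a1 a2 p : on_ellipse a1 a2 p -> Amul a1 a2 p <> (0,0).
Proof. unfold on_ellipse; intros H E. rewrite E in H. unfold dot in H; simpl in H. lra. Qed.

Lemma refl_facts (uin w p : pt) : w <> (0,0) -> dot w p = 1 -> dot uin uin = 1 ->
  let nu := vscale (/ norm w) w in
  let uout := vsub uin (vscale (2 * dot uin nu) nu) in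
  dot uout w = - dot uin w /\
  1 - dot uin uout = dot uin w * (dot uin p - dot uout p).
Proof. intros Hw Hwp Hu nu uout.
  pose proof (norm_pos w Hw) as Hn. pose proof (norm_sq w) as Hs.
  unfold uout, nu. rewrite !dot_sub_l, !dot_sub_r, ?dot_scale_l, ?dot_scale_r, ?dot_scale_l.
 rewrite Hwp, Hu.
  rewrite <- Hs. split; field; lra. Qed.

Lemma tele (f : nat -> R) m : sum_f_R0 (fun k => f k - f (S k)) m = f 0%nat - f (S m).
Proof. induction m; simpl; [ring | rewrite IHm; ring]. Qed.
Lemma sum_add (f g : nat -> R) m : sum_f_R0 (fun k => f k + g k) m = sum_f_R0 f m + sum_f_R0 g m.
Proof. induction m; simpl; [ring | rewrite IHm; ring]. Qed.
Lemma sum_lin (f : nat -> R) c m : sum_f_R0 (fun k => c * f k - 1) m = c * sum_f_R0 f m - INR (S m).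
Proof. induction m; [simpl; ring|]. simpl sum_f_R0. rewrite IHm. rewrite (S_INR (S m)). ring. Qed.

Lemma norm_swap a b : norm (vsub a b) = norm (vsub b a).
Proof. unfold norm; f_equal; destruct a, b; unfold dot, vsub; simpl; ring. Qed.

Lemma dot_units d e : d <> (0,0) -> e <> (0,0) ->
  dot d e / (norm d * norm e) = dot (vscale (/norm d) d) (vscale (/norm e) e).
Proof. intros Hd He. pose proof (norm_pos d Hd); pose proof (norm_pos e He).
  rewrite dot_scale_l, dot_scale_r. field; lra. Qed.

Theorem theorem2p4 (a1 a2 : R) (n : nat) (p : nat -> pt) :
  0 < a1 -> 0 < a2 ->
  periodic_billiard a1 a2 n p ->
  let L := perimeter p n in
  let J := - dot (unit_dir (p 1%nat) (p 2%nat)) (Amul a1 a2 (p 1%nat)) in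
  sum_f_R0 (fun k => cos_angle p (S k)) (n - 1) = J * L - INR n.
Proof.
  intros Ha1 Ha2 [Hn [Hper [Hell [Hne Hrefl]]]] L J.
  set (u := fun i => unit_dir (p i) (p (S i))).
  set (l := fun i => norm (vsub (p (S i)) (p i))).
  set (K := fun i => - dot (u i) (Amul a1 a2 (p i))).
  set (g := fun i => dot (u i) (p i)).
  assert (Hu1 : forall i, dot (u i) (u i) = 1).
  { intro i. apply unit_self, vsub_nz, Hne. }
  assert (HR : forall j, dot (u (S j)) (Amul a1 a2 (p (S j))) = - dot (u j) (Amul a1 a2 (p (S j)))
     /\ 1 - dot (u j) (u (S j)) = dot (u j) (Amul a1 a2 (p (S j))) * (dot (u j) (p (S j)) - dot (u (S j)) (p (S j)))).
  { intro j. assert (H := Hrefl (S j) ltac:(lia)).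
    replace (S j - 1)%nat with j in H by lia. unfold reflection_law in H.
    assert (Eu : u (S j) = vsub (u j) (vscale (2 * dot (u j) (vscale (/ norm (Amul a1 a2 (p (S j)))) (Amul a1 a2 (p (S j))))) (vscale (/ norm (Amul a1 a2 (p (S j)))) (Amul a1 a2 (p (S j)))))).
    { unfold u. exact H. }
    rewrite Eu. apply refl_facts.
    - apply Amul_nz, Hell.
    - apply Hell.
    - apply Hu1. }
  assert (HC : forall j, dot (u j) (Amul a1 a2 (p (S j))) = K j).
  { intro j. unfold K, u. apply chord; apply Hell. }
  assert (HK : forall j, K j = K 0%nat).
  { induction j; [reflexivity|]. rewrite <- IHj. unfold K at 1.
    rewrite (proj1 (HR j)), HC. ring. }
  assert (HJ : J = K 0%nat). { rewrite <- (HK 1%nat). reflexivity. }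
  assert (Hterm : forall k, cos_angle p (S k) = J * (g k - g (S k) + l k) - 1).
  { intro k. destruct (HR k) as [_ H2]. rewrite HC, (HK k), <- HJ in H2.
    assert (Hg : dot (u k) (p (S k)) = g k + l k).
    { unfold g, l. replace (p (S k)) with (p (S k)) by reflexivity.
      rewrite <- unit_sub. unfold u. rewrite dot_sub_r. ring. }
    unfold cos_angle. replace (S k - 1)%nat with k by lia.
    rewrite norm_swap.
    replace (dot (vsub (p k) (p (S k))) (vsub (p (S (S k))) (p (S k))))
      with (- dot (vsub (p (S k)) (p k)) (vsub (p (S (S k))) (p (S k)))).
    2:{ destruct (p k), (p (S k)), (p (S (S k))); unfold dot, vsub; simpl; ring. }
    unfold Rdiv. rewrite Ropp_mult_distr_l_reverse. fold (Rdiv (dot (vsub (p (S k)) (p k)) (vsub (p (S (S k))) (p (S k)))) (norm (vsub (p (S k)) (p k)) * norm (vsub (p (S (S k))) (p (S k))))).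
    rewrite dot_units by (apply vsub_nz, Hne).
    fold (unit_dir (p k) (p (S k))). fold (unit_dir (p (S k)) (p (S (S k)))).
    fold (u k). fold (u (S k)). rewrite Hg in H2. change (dot (u (S k)) (p (S k))) with (g (S k)) in H2. lra. }
  rewrite (sum_eq _ _ _ (fun k _ => Hterm k)).
  rewrite sum_lin. replace (S (n - 1)) with n by lia.
  rewrite sum_add, tele. replace (S (n - 1)) with n by lia.
  replace (g n) with (g 0%nat).
  2:{ unfold g, u. rewrite <- (Hper 0%nat), <- (Hper 1%nat). reflexivity. }
  assert (HL : L = sum_f_R0 l (n - 1)).
  { unfold L, perimeter. fold l.
    assert (T := tele l (n-1)). replace (S (n - 1)) with n in T by lia.
    assert (Hl : l n = l 0%nat).
    { unfold l. rewrite <- (Hper 0%nat), <- (Hper 1%nat). reflexivity. }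
    assert (E : sum_f_R0 (fun k => l k - l (S k)) (n - 1) = sum_f_R0 l (n-1) - sum_f_R0 (fun k => l (S k)) (n-1)).
    { apply minus_sum. }
    change (fun k => norm (vsub (p (S (S k))) (p (S k)))) with (fun k => l (S k)). lra. }
  rewrite HL. ring.
Qed.
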